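(* Let $N(T)$ be a net on a grid $T$ with lines $s_i$, $t_j$. Suppose that $\|[\sigma_1,\sigma_2;\tau_1,\tau_2]N\|_\infty\le L$ holds (a) whenever $\sigma_1=s_i$, $\sigma_2=s_{i+1}$ and $\tau_1\ne\tau_2$ with $t_j\le\tau_1,\tau_2\le t_{j+1}$, for some $i,j\in\mathbb{Z}$, and (b) whenever $\tau_1=t_j$, $\tau_2=t_{j+1}$ and $\sigma_1\ne\sigma_2$ with $s_i\le\sigma_1,\sigma_2\le s_{i+1}$, for some $i,j\in\mathbb{Z}$. Then $N(T)$ has the BMSDD property with constant $L$.
   Context: For strictly increasing bi-infinite real sequences $(s_i)_{i\in\mathbb{Z}}$, $(t_j)_{j\in\mathbb{Z}}$, unbounded above and below, the grid is $T=\bigcup_i\{s_i\}\times\mathbb{R}\ \cup\ \bigcup_j\mathbb{R}\times\{t_j\}$; a net $N(T)$ is a function on $T$ with values in $\mathbb{R}^m$. For $\sigma_1\ne\sigma_2$, $\tau_1\ne\tau_2$, $[\sigma_1,\sigma_2;\tau_1,\tau_2]N=\frac{N(\sigma_1,\tau_1)+N(\sigma_2,\tau_2)-N(\sigma_2,\tau_1)-N(\sigma_1,\tau_2)}{(\sigma_1-\sigma_2)(\tau_1-\tau_2)}$. The net has the BMSDD property with constant $L$ if $\|[\sigma_1,\sigma_2;\tau_1,\tau_2]N\|_\infty\le L$ for all $\sigma_1\ne\sigma_2$, $\tau_1\ne\tau_2$ with $(\sigma_i,\tau_j)\in T$ for all $i,j\in\{1,2\}$. *)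

(* Defs.v *)
From HB Require Import structures.
From mathcomp Require Import all_boot all_order all_algebra.
From mathcomp Require Import reals.
Set Implicit Arguments. Unset Strict Implicit. Unset Printing Implicit Defensive.
Import Order.TTheory GRing.Theory Num.Theory.
Local Open Scope ring_scope.

Definition grid_seq (R : realType) (s : int -> R) : Prop :=
  (forall i : int, s i < s (i + 1)) /\
  (forall x : R, exists i : int, x < s i) /\
  (forall x : R, exists i : int, s i < x).

Definition on_grid (R : realType) (s t : int -> R) (x y : R) : Prop :=
  (exists i : int, x = s i) \/ (exists j : int, y = t j).

Definition infnorm (R : realType) (m : nat) (v : 'rV[R]_m) : R :=
  \big[Num.max/0]_(k < m) `|v 0 k|.

Definition divdiff (R : realType) (m : nat) (N : R -> R -> 'rV[R]_m)
  (s1 s2 t1 t2 : R) : 'rV[R]_m :=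
  ((s1 - s2) * (t1 - t2))^-1 *: (N s1 t1 + N s2 t2 - N s2 t1 - N s1 t2).

Definition BMSDD (R : realType) (m : nat) (s t : int -> R)
  (N : R -> R -> 'rV[R]_m) (L : R) : Prop :=
  forall s1 s2 t1 t2 : R, s1 != s2 -> t1 != t2 ->
    on_grid s t s1 t1 -> on_grid s t s1 t2 ->
    on_grid s t s2 t1 -> on_grid s t s2 t2 ->
    infnorm (divdiff N s1 s2 t1 t2) <= L.

(* Main.v *)
Require Import Defs.
From HB Require Import structures.
From mathcomp Require Import all_boot all_order all_algebra.
From mathcomp Require Import reals.
From mathcomp Require Import ring lra.
Import Order.TTheory GRing.Theory Num.Theory.
Local Open Scope ring_scope.

Section Aux.
Variable R : realType.
Implicit Types (f : R -> R -> R) (L : R) (s t : int -> R).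

Definition Dd f (x1 x2 y1 y2 : R) := f x1 y1 + f x2 y2 - f x2 y1 - f x1 y2.
Definition Pb f L (x1 x2 y1 y2 : R) :=
  `|Dd f x1 x2 y1 y2| <= L * (x2 - x1) * (y2 - y1).

Lemma Pb_addx f L x1 x2 x3 y1 y2 :
  Pb f L x1 x2 y1 y2 -> Pb f L x2 x3 y1 y2 -> Pb f L x1 x3 y1 y2.
Proof.
rewrite /Pb => h1 h2.
have -> : Dd f x1 x3 y1 y2 = Dd f x1 x2 y1 y2 + Dd f x2 x3 y1 y2
  by rewrite /Dd; ring.
apply: le_trans (ler_normD _ _) _.
have -> : L * (x3 - x1) * (y2 - y1) = L * (x2 - x1) * (y2 - y1) + L * (x3 - x2) * (y2 - y1) by ring.
exact: lerD.
Qed.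

Lemma Pb_addy f L x1 x2 y1 y2 y3 :
  Pb f L x1 x2 y1 y2 -> Pb f L x1 x2 y2 y3 -> Pb f L x1 x2 y1 y3.
Proof.
rewrite /Pb => h1 h2.
have -> : Dd f x1 x2 y1 y3 = Dd f x1 x2 y1 y2 + Dd f x1 x2 y2 y3
  by rewrite /Dd; ring.
apply: le_trans (ler_normD _ _) _.
have -> : L * (x2 - x1) * (y3 - y1) = L * (x2 - x1) * (y2 - y1) + L * (x2 - x1) * (y3 - y2) by ring.
exact: lerD.
Qed.

Lemma Pb_eqy f L x1 x2 y : Pb f L x1 x2 y y.
Proof.
rewrite /Pb /Dd.
have -> : f x1 y + f x2 y - f x2 y - f x1 y = 0 by ring.
by rewrite normr0 subrr mulr0.
Qed.

Lemma Pb_eqx f L x y1 y2 : Pb f L x x y1 y2.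
Proof.
rewrite /Pb /Dd.
have -> : f x y1 + f x y2 - f x y1 - f x y2 = 0 by ring.
by rewrite normr0 subrr mulr0 mul0r.
Qed.

Lemma Pb_tr f L x1 x2 y1 y2 :
  Pb (fun a b => f b a) L y1 y2 x1 x2 -> Pb f L x1 x2 y1 y2.
Proof.
rewrite /Pb /Dd => h.
have -> : f x1 y1 + f x2 y2 - f x2 y1 - f x1 y2 = f x1 y1 + f x2 y2 - f x1 y2 - f x2 y1 by ring.
have -> : L * (x2 - x1) * (y2 - y1) = L * (y2 - y1) * (x2 - x1) by ring.
exact: h.
Qed.

Lemma mono s : (forall i, s i < s (i + 1)) -> forall i k, i <= k -> s i <= s k.
Proof.
move=> inc i k ik.
have -> : k = i + (`|k - i|%N)%:Z by rewrite gez0_abs ?subr_ge0 // addrCA subrr addr0.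
elim: `|k - i|%N => [|n IH]; first by rewrite addr0.
rewrite -[n.+1]addn1 PoszD addrA.
exact: (le_trans IH (ltW (inc _))).
Qed.

Lemma strip f L s t :
  (forall i, t i < t (i + 1)) ->
  (forall x, exists i, x < t i) -> (forall x, exists i, t i < x) ->
  (forall i j y1 y2, t j <= y1 -> y1 <= y2 -> y2 <= t (j + 1) ->
     Pb f L (s i) (s (i + 1)) y1 y2) ->
  forall a b, a <= b -> forall y1 y2, y1 <= y2 -> Pb f L (s a) (s b) y1 y2.
Proof.
move=> tinc tup tdn H.
have S1 : forall i j (n : nat) y1 y2, t j <= y1 -> y1 <= y2 -> y2 <= t (j + n%:Z) ->
     Pb f L (s i) (s (i + 1)) y1 y2.
  move=> i j n; elim: n => [|n IH] y1 y2 h1 h2 h3.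
    rewrite addr0 in h3.
    have -> : y2 = y1 by apply/eqP; rewrite eq_le h2 (le_trans h3 h1).
    exact: Pb_eqy.
  rewrite -[n.+1]addn1 PoszD addrA in h3.
  case: (lerP y2 (t (j + n))) => c2; first exact: IH.
  case: (lerP (t (j + n)) y1) => c1; first exact: (H i (j + n)).
  apply: (@Pb_addy _ _ _ _ _ (t (j + n))).
    by apply: IH => //; apply: ltW.
  by apply: (H i (j + n)) => //; apply: ltW.
have S2 : forall i y1 y2, y1 <= y2 -> Pb f L (s i) (s (i + 1)) y1 y2.
  move=> i y1 y2 h.
  have [j hj] := tdn y1; have [j' hj'] := tup y2.
  case: (lerP j j') => jj.
    apply: (S1 i j (`|j' - j|%N)) => //; first exact: ltW.
    by rewrite gez0_abs ?subr_ge0 // addrCA subrr addr0 ltW.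
  have := @mono t tinc _ _ (ltW jj); lra.
have S3 : forall a (n : nat) y1 y2, y1 <= y2 -> Pb f L (s a) (s (a + n%:Z)) y1 y2.
  move=> a n y1 y2 h; elim: n => [|n IH]; first by rewrite addr0; exact: Pb_eqx.
  rewrite -[n.+1]addn1 PoszD addrA.
  exact: (Pb_addx _ _ _ _ _ _ _ IH (S2 (a + n) _ _ h)).
move=> a b ab y1 y2 h.
have -> : b = a + (`|b - a|%N)%:Z by rewrite gez0_abs ?subr_ge0 // addrCA subrr addr0.
exact: S3.
Qed.


Lemma infnorm_le (m : nat) (v : 'rV[R]_m) (L : R) :
  0 <= L -> (forall k, `|v 0 k| <= L) -> infnorm v <= L.
Proof.
move=> L0 h; rewrite /infnorm.
apply: (big_ind (fun x => x <= L)) => // x y hx hy.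
by rewrite ge_max hx hy.
Qed.

Lemma infnorm_ge (m : nat) (v : 'rV[R]_m) k : `|v 0 k| <= infnorm v.
Proof.
by rewrite /infnorm (bigD1 k) //= le_max lexx.
Qed.

Lemma infnorm_ge0 (m : nat) (v : 'rV[R]_m) : 0 <= infnorm v.
Proof.
rewrite /infnorm; apply: (big_ind (fun x => 0 <= x)) => // x y hx hy.
by rewrite le_max hx.
Qed.

Lemma conv1 (a b c d D L : R) : a != b -> c != d ->
  `|((a - b) * (c - d))^-1 * D| <= L -> `|D| <= L * `|a - b| * `|c - d|.
Proof.
move=> ab cd.
have hp : 0 < `|(a - b) * (c - d)| by rewrite normr_gt0 mulf_neq0 // subr_eq0.
move: hp; set x := (a - b) * (c - d) => hp.
rewrite normrM normfV [_ * `|D|]mulrC ler_pdivrMr // /x normrM mulrA //.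
Qed.

Lemma conv2 (a b c d D L : R) : a != b -> c != d ->
  `|D| <= L * `|a - b| * `|c - d| -> `|((a - b) * (c - d))^-1 * D| <= L.
Proof.
move=> ab cd.
have hp : 0 < `|(a - b) * (c - d)| by rewrite normr_gt0 mulf_neq0 // subr_eq0.
move: hp; set x := (a - b) * (c - d) => hp.
rewrite normrM normfV [_ * `|D|]mulrC ler_pdivrMr // /x normrM mulrA //.
Qed.


Lemma normlem (x y : R) : x <= y -> `|x - y| = y - x.
Proof. by move=> h; rewrite distrC ger0_norm // subr_ge0. Qed.

Lemma corners (A B C D : Prop) :
  (A \/ C) -> (A \/ D) -> (B \/ C) -> (B \/ D) -> (A /\ B) \/ (C /\ D).
Proof. tauto. Qed.

Lemma PbG f L x1 x2 y1 y2 : x1 <= x2 -> y1 <= y2 -> Pb f L x1 x2 y1 y2 ->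
  `|Dd f x1 x2 y1 y2| <= L * `|x1 - x2| * `|y1 - y2| /\
  `|Dd f x2 x1 y1 y2| <= L * `|x2 - x1| * `|y1 - y2| /\
  `|Dd f x1 x2 y2 y1| <= L * `|x1 - x2| * `|y2 - y1| /\
  `|Dd f x2 x1 y2 y1| <= L * `|x2 - x1| * `|y2 - y1|.
Proof.
move=> hx hy; rewrite /Pb => h.
have e1 : Dd f x2 x1 y1 y2 = - Dd f x1 x2 y1 y2 by rewrite /Dd; ring.
have e2 : Dd f x1 x2 y2 y1 = - Dd f x1 x2 y1 y2 by rewrite /Dd; ring.
have e3 : Dd f x2 x1 y2 y1 = Dd f x1 x2 y1 y2 by rewrite /Dd; ring.
rewrite e1 e2 e3 !normrN (distrC x2) (distrC y2) (normlem _ _ hx) (normlem _ _ hy); by do !split.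
Qed.

Lemma smono (s : int -> R) : (forall i, s i < s (i + 1)) ->
  forall a b, s a <= s b -> a <= b.
Proof.
move=> inc a b h; case: (lerP a b) => // ba.
rewrite -lezD1 in ba.
have h2 := mono _ inc _ _ ba; have h1 := inc b; exfalso.
have := lt_le_trans h1 h2; rewrite ltNge h //.
Qed.

Lemma scalar f L s t : grid_seq s -> grid_seq t ->
  (forall i j y1 y2, t j <= y1 -> y1 <= y2 -> y2 <= t (j + 1) ->
     Pb f L (s i) (s (i + 1)) y1 y2) ->
  (forall i j x1 x2, s i <= x1 -> x1 <= x2 -> x2 <= s (i + 1) ->
     Pb f L x1 x2 (t j) (t (j + 1))) ->
  forall x1 x2 y1 y2, on_grid s t x1 y1 -> on_grid s t x1 y2 ->
    on_grid s t x2 y1 -> on_grid s t x2 y2 ->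
    `|Dd f x1 x2 y1 y2| <= L * `|x1 - x2| * `|y1 - y2|.
Proof.
move=> [sinc [sup sdn]] [tinc [tup tdn]] Ha Hb.
have K : forall x1 x2 y1 y2, x1 <= x2 -> y1 <= y2 ->
    on_grid s t x1 y1 -> on_grid s t x1 y2 ->
    on_grid s t x2 y1 -> on_grid s t x2 y2 -> Pb f L x1 x2 y1 y2.
  move=> x1 x2 y1 y2 hx hy c11 c12 c21 c22.
  case: (corners _ _ _ _ c11 c12 c21 c22) => [[[a ea] [b eb]] | [[a ea] [b eb]]]; subst.
    exact: (strip _ _ _ _ tinc tup tdn Ha _ _ (smono _ sinc _ _ hx) _ _ hy).
  apply: Pb_tr.
  apply: (strip _ _ _ _ sinc sup sdn _ _ _ (smono _ tinc _ _ hy) _ _ hx).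
  move=> i j z1 z2 h1 h2 h3; apply: Pb_tr; exact: (Hb j i z1 z2 h1 h2 h3).
move=> x1 x2 y1 y2 c11 c12 c21 c22.
case: (leP x1 x2) => hx; case: (leP y1 y2) => hy.
- have [? [? [? ?]]] := PbG _ _ _ _ _ _ hx hy (K _ _ _ _ hx hy c11 c12 c21 c22); done.
- have hy' := ltW hy.
  have [? [? [? ?]]] := PbG _ _ _ _ _ _ hx hy' (K _ _ _ _ hx hy' c12 c11 c22 c21); done.
- have hx' := ltW hx.
  have [? [? [? ?]]] := PbG _ _ _ _ _ _ hx' hy (K _ _ _ _ hx' hy c21 c22 c11 c12); done.
- have hx' := ltW hx; have hy' := ltW hy.
  have [? [? [? ?]]] := PbG _ _ _ _ _ _ hx' hy' (K _ _ _ _ hx' hy' c22 c21 c12 c11); done.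
Qed.

End Aux.

Theorem lemma3 (R : realType) (m : nat) (s t : int -> R)
  (N : R -> R -> 'rV[R]_m) (L : R) :
  grid_seq s -> grid_seq t ->
  (forall (i j : int) (t1 t2 : R), t1 != t2 ->
     t j <= t1 <= t (j + 1) -> t j <= t2 <= t (j + 1) ->
     infnorm (divdiff N (s i) (s (i + 1)) t1 t2) <= L) ->
  (forall (i j : int) (s1 s2 : R), s1 != s2 ->
     s i <= s1 <= s (i + 1) -> s i <= s2 <= s (i + 1) ->
     infnorm (divdiff N s1 s2 (t j) (t (j + 1))) <= L) ->
  BMSDD s t N L.
Proof.
move=> gs gt Ha Hb s1 s2 t1 t2 ns nt c11 c12 c21 c22.
have L0 : 0 <= L.
  have h := gt.1 0; move: (h); rewrite lt_neqAle => /andP[hn _].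
  have H := Ha 0 0 (t 0) (t (0+1)) hn.
  have cc1 : t 0 <= t 0 <= t (0+1) by rewrite lexx ltW.
  have cc2 : t 0 <= t (0+1) <= t (0+1) by rewrite lexx ltW.
  exact: le_trans (infnorm_ge0 _ _ _) (H cc1 cc2).
apply: infnorm_le => // k.
rewrite /divdiff !mxE.
apply: conv2 => //.
pose f := fun x y => N x y 0 k.
apply: (scalar R f L s t gs gt _ _ _ _ _ _ c11 c12 c21 c22).
- move=> i j y1 y2 h1 h2 h3.
  case: (leP y2 y1) => h4.
    have -> : y2 = y1 by apply/eqP; rewrite eq_le h2 h4.
    exact: Pb_eqy.
  have hn : y1 != y2 by rewrite lt_eqF.
  have cc1 : t j <= y1 <= t (j + 1) by rewrite h1 (le_trans h2 h3).
  have cc2 : t j <= y2 <= t (j + 1) by rewrite h3 (le_trans h1 h2).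
  have H := Ha i j _ _ hn cc1 cc2.
  have H1 := le_trans (infnorm_ge _ _ _ k) H; rewrite /divdiff !mxE in H1.
  have hs : s i != s (i + 1) by rewrite lt_eqF // gs.1.
  have H2 := conv1 _ _ _ _ _ _ _ hs hn H1.
  rewrite /Pb /Dd /f; rewrite (normlem _ _ _ (ltW (gs.1 i))) (normlem _ _ _ h2) in H2.
  exact: H2.
- move=> i j x1 x2 h1 h2 h3.
  case: (leP x2 x1) => h4.
    have -> : x2 = x1 by apply/eqP; rewrite eq_le h2 h4.
    exact: Pb_eqx.
  have hn : x1 != x2 by rewrite lt_eqF.
  have cc1 : s i <= x1 <= s (i + 1) by rewrite h1 (le_trans h2 h3).
  have cc2 : s i <= x2 <= s (i + 1) by rewrite h3 (le_trans h1 h2).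
  have H := Hb i j _ _ hn cc1 cc2.
  have H1 := le_trans (infnorm_ge _ _ _ k) H; rewrite /divdiff !mxE in H1.
  have ht : t j != t (j + 1) by rewrite lt_eqF // gt.1.
  have H2 := conv1 _ _ _ _ _ _ _ hn ht H1.
  rewrite /Pb /Dd /f; rewrite (normlem _ _ _ (ltW (gt.1 j))) (normlem _ _ _ h2) in H2.
  exact: H2.
Qed.
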